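(* Let $G$ be a simple graph with $n$ vertices, let $G'$ be obtained from $G$ by a symmetric $\mathcal K_{xy}$-operation, and let $f:\mathbb R^n\to\mathbb R$ be a convex symmetric function. Then $f[G]\le f[G']$. In particular $\sum_{v\in V(G)}d(v,G)^s\le\sum_{v\in V(G')}d(v,G')^s$ for every positive integer $s$.
   Context: $d(v,G)$ is the degree of $v$ in $G$, and $f[G]=f(d(v_1,G),\dots,d(v_n,G))$ for any ordering $v_1,\dots,v_n$ of $V(G)$. A function $f:\mathbb R^n\to\mathbb R$ is symmetric if it is invariant under permuting coordinates; a symmetric $f$ is called convex if for all $x\in\mathbb R^n$ with nonnegative coordinates, all indices $r\ne s$ with $x_r\ge x_s$, and all $\varepsilon\ge0$, one has $f(x+\varepsilon e_r)\ge f(x+\varepsilon e_s)$ ($e_i$ the standard unit vectors). $\mathcal K_{xy}$-operation: let $G$ be a simple graph, $x\ne y$ vertices, $\mathcal K$ an induced subgraph of $G$ containing $x$ and $y$, and $N(v)$ the neighbourhood of $v$. Put $X=N(x)\setminus(V(\mathcal K)\cup N(y))$, $Y=N(y)\setminus(V(\mathcal K)\cup N(x))$, $[x,X]=\{xv:v\in X\}$, $[y,X]=\{yv:v\in X\}$, $[y,Y]=\{yv:v\in Y\}$. The graph $\mathcal K_{xy}(G)=(G-[x,X])\cup[y,X]$ (on the same vertex set) is obtained from $G$ by the $\mathcal K_{xy}$-operation. The operation is called symmetric if the graph $G-([x,X]\cup[y,Y])$ has an automorphism $\alpha$ with $\alpha(x)=y$, $\alpha(y)=x$, $\alpha(V(\mathcal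 K))=V(\mathcal K)$, and $\alpha(v)=v$ for every $v\in X\cup Y$. *)

(* Defs.v *)
From HB Require Import structures.
From mathcomp Require Import all_boot all_order all_algebra all_fingroup.
Set Implicit Arguments. Unset Strict Implicit. Unset Printing Implicit Defensive.
Import Order.TTheory GRing.Theory Num.Theory.

Definition simple_graph (T : finType) (e : rel T) : Prop :=
  symmetric e /\ irreflexive e.

Definition nbhd (T : finType) (e : rel T) (v : T) : {set T} := [set u | e v u].
Definition deg (T : finType) (e : rel T) (v : T) : nat := #|nbhd e v|.

Definition degvec (R : realFieldType) (T : finType) (e : rel T)
  : 'I_#|T| -> R := fun i => ((deg e (enum_val i))%:R)%R.

Definition sym_fun (R : realFieldType) (n : nat) (f : ('I_n -> R) -> R) : Prop :=
  forall (s : 'S_n) (x : 'I_n -> R), f (fun i => x (s i)) = f x.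

Definition addunit (R : realFieldType) (n : nat) (x : 'I_n -> R) (eps : R) (r : 'I_n)
  : 'I_n -> R := fun i => (x i + (if i == r then eps else 0))%R.

(* convexity in the sense of the paper *)
Definition convex_sym (R : realFieldType) (n : nat) (f : ('I_n -> R) -> R) : Prop :=
  forall (x : 'I_n -> R), (forall i, 0 <= x i)%R ->
  forall r s : 'I_n, r != s -> (x s <= x r)%R ->
  forall eps : R, (0 <= eps)%R -> (f (addunit x eps s) <= f (addunit x eps r))%R.

(* X = N(x) \ (V(K) ∪ N(y)) *)
Definition Kset (T : finType) (e : rel T) (K : {set T}) (x y : T) : {set T} :=
  nbhd e x :\: (K :|: nbhd e y).

(* indicator of the edge set [a, A] = {a v : v in A} *)
Definition star (T : finType) (a : T) (A : {set T}) (u v : T) : bool :=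
  ((u == a) && (v \in A)) || ((v == a) && (u \in A)).

(* K_xy(G) = (G - [x,X]) ∪ [y,X] *)
Definition Kop (T : finType) (e : rel T) (K : {set T}) (x y : T) : rel T :=
  fun u v => (e u v && ~~ star x (Kset e K x y) u v) || star y (Kset e K x y) u v.

(* G - ([x,X] ∪ [y,Y]) *)
Definition Kcore (T : finType) (e : rel T) (K : {set T}) (x y : T) : rel T :=
  fun u v => e u v && ~~ star x (Kset e K x y) u v && ~~ star y (Kset e K y x) u v.

Definition Kop_symmetric (T : finType) (e : rel T) (K : {set T}) (x y : T) : Prop :=
  exists alpha : {perm T},
    (forall u v, Kcore e K x y (alpha u) (alpha v) = Kcore e K x y u v) /\
    alpha x = y /\ alpha y = x /\ alpha @: K = K /\
    (forall v, v \in Kset e K x y :|: Kset e K y x -> alpha v = v).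

(* Main.v *)
Require Import Defs.
From HB Require Import structures.
From mathcomp Require Import all_boot all_order all_algebra all_fingroup.
From mathcomp Require Import zify.
Import Order.TTheory GRing.Theory Num.Theory.
Set Implicit Arguments. Unset Strict Implicit.

Section Degs.
Variables (T : finType) (e : rel T) (x y : T) (K : {set T}).
Hypotheses (se : symmetric e) (ie : irreflexive e) (nxy : x != y) (xK : x \in K) (yK : y \in K).
Let X := Kset e K x y.
Let Y := Kset e K y x.

Lemma inX u : (u \in X) = [&& e x u, u \notin K & ~~ e y u].
Proof. rewrite !inE negb_or; by case: (e x u); case: (u \in K); case: (e y u). Qed.
Lemma inY u : (u \in Y) = [&& e y u, u \notin K & ~~ e x u].
Proof. rewrite !inE negb_or; by case: (e x u); case: (u \in K); case: (e y u). Qed.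

Lemma xX : x \notin X. Proof. by rewrite inX xK andbF. Qed.
Lemma yX : y \notin X. Proof. by rewrite inX yK andbF. Qed.
Lemma xY : x \notin Y. Proof. by rewrite inY xK andbF. Qed.
Lemma yY : y \notin Y. Proof. by rewrite inY yK andbF. Qed.

Lemma core_x : nbhd (Kcore e K x y) x = nbhd e x :\: X.
Proof.
apply/setP=> u; rewrite !inE /Kcore /star eqxx /= (negbTE nxy) /=.
rewrite -/X -/Y (negbTE xY) (negbTE xX) !andbF !orbF /=.
rewrite inX; by case: (e x u); case: (u \in K); case: (e y u).
Qed.

Lemma core_y : nbhd (Kcore e K x y) y = nbhd e y :\: Y.
Proof.
apply/setP=> u; rewrite !inE /Kcore /star eqxx /= eq_sym (negbTE nxy) /=.
rewrite -/X -/Y (negbTE yY) (negbTE yX) !andbF !orbF /=.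
rewrite inY; by case: (e x u); case: (u \in K); case: (e y u).
Qed.

Lemma subX : X \subset nbhd e x.
Proof. by apply/subsetP=> u; rewrite inX inE => /andP[]. Qed.
Lemma subY : Y \subset nbhd e y.
Proof. by apply/subsetP=> u; rewrite inY inE => /andP[]. Qed.

Lemma deg_ex : deg e x = deg (Kcore e K x y) x + #|X|.
Proof.
rewrite /deg core_x cardsD (setIidPr subX) subnK //.
exact: subset_leq_card subX.
Qed.

Lemma deg_ey : deg e y = deg (Kcore e K x y) y + #|Y|.
Proof.
rewrite /deg core_y cardsD (setIidPr subY) subnK //.
exact: subset_leq_card subY.
Qed.

Lemma Kop_x : nbhd (Kop e K x y) x = nbhd e x :\: X.
Proof.
apply/setP=> u; rewrite !inE /Kop /star eqxx /= (negbTE nxy) /= -/X (negbTE xX).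
rewrite !andbF !orbF /= ?inX; by case: (e x u); case: (u \in K); case: (e y u).
Qed.

Lemma Kop_y : nbhd (Kop e K x y) y = nbhd e y :|: X.
Proof.
apply/setP=> u; rewrite !inE /Kop /star eqxx /= eq_sym (negbTE nxy) /= -/X (negbTE yX).
rewrite !andbF !orbF /= ?andbT ?inX; by case: (e x u); case: (u \in K); case: (e y u).
Qed.

Lemma deg_Kx : deg (Kop e K x y) x = deg (Kcore e K x y) x.
Proof. by rewrite /deg Kop_x core_x. Qed.

Lemma deg_Ky : deg (Kop e K x y) y = deg e y + #|X|.
Proof.
rewrite /deg Kop_y cardsU.
have -> : nbhd e y :&: X = set0.
  apply/setP=> u; rewrite in_setI inX inE in_set0. by case: (e y u); rewrite ?andbF.
by rewrite cards0 subn0.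
Qed.

Lemma deg_Kother v : v != x -> v != y -> v \notin X -> deg (Kop e K x y) v = deg e v.
Proof.
move=> vx vy vX; rewrite /deg; apply: eq_card => u.
rewrite !inE /Kop /star (negbTE vx) (negbTE vy) /= -/X (negbTE vX).
by rewrite !andbF !orbF andbT.
Qed.

Lemma deg_KX v : v \in X -> deg (Kop e K x y) v = deg e v.
Proof.
move=> vX.
have vx : v != x by apply: contraNneq xX => <-.
have vy : v != y by apply: contraNneq yX => <-.
move: (vX); rewrite inX => /and3P[exv _ neyv].
rewrite /deg.
have -> : nbhd (Kop e K x y) v = y |: (nbhd e v :\ x).
  apply/setP=> u; rewrite !inE /Kop /star (negbTE vx) (negbTE vy) /= -/X.
  rewrite vX !andbT; case: (u == y); rewrite /= ?orbT //; by rewrite orbF andbC.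
rewrite cardsU1 !inE se (negbTE neyv) andbF /= add1n.
by rewrite [RHS](cardsD1 x) inE se exv.
Qed.

Lemma core_sym : Kop_symmetric e K x y ->
  deg (Kcore e K x y) x = deg (Kcore e K x y) y.
Proof.
case=> a [Ha [ax [ay _]]].
rewrite /deg.
have H : nbhd (Kcore e K x y) (a x) = a @: nbhd (Kcore e K x y) x.
  apply/setP=> w; rewrite inE; apply/idP/imsetP.
  - move=> H; exists ((a^-1)%g w); last by rewrite permKV.
    by rewrite inE -Ha permKV.
  - by case=> u; rewrite inE => Hu ->; rewrite Ha.
rewrite ax in H; rewrite H card_imset //; exact: perm_inj.
Qed.

End Degs.
From Stdlib Require Import FunctionalExtensionality.
Lemma exp_mono m n k : m <= n -> m ^ k <= n ^ k.
Proof. move=> h; elim: k => [|k IH] //; rewrite !expnS; exact: leq_mul. Qed.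

Lemma pow_ineq a d e s : (a+e)^s + (a+d)^s <= a^s + (a+d+e)^s.
Proof.
elim: s => [|s IH]; first by [].
rewrite !expnS.
have h1 : (a+e)^s <= (a+d+e)^s by apply: exp_mono; lia.
have h2 : (a+d)^s <= (a+d+e)^s by apply: exp_mono; lia.
nia.
Qed.

Unset Implicit Arguments. Set Strict Implicit.
Theorem mainTheorem15 (T : finType) (e : rel T) (x y : T) (K : {set T}) :
  simple_graph e -> x != y -> x \in K -> y \in K ->
  Kop_symmetric e K x y ->
  (forall (R : realFieldType) (f : ('I_#|T| -> R) -> R),
      sym_fun f -> convex_sym f ->
      (f (degvec R e) <= f (degvec R (Kop e K x y)))%R) /\
  (forall s : nat, 0 < s ->
      \sum_(v : T) deg e v ^ s <= \sum_(v : T) deg (Kop e K x y) v ^ s).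
Proof.
move=> [se ie] nxy xK yK Hsym.
set c := deg (Kcore e K x y) x.
set nX := #|Kset e K x y|.
set nY := #|Kset e K y x|.
have dx : deg e x = c + nX by rewrite (deg_ex e nxy xK).
have dy : deg e y = c + nY by rewrite (deg_ey e nxy yK) /c (core_sym Hsym).
have dKx : deg (Kop e K x y) x = c by rewrite (deg_Kx e nxy xK).
have dKy : deg (Kop e K x y) y = c + nY + nX by rewrite (deg_Ky e nxy yK) dy.
have doth v : v != x -> v != y -> deg (Kop e K x y) v = deg e v.
  move=> vx vy; case vX: (v \in Kset e K x y).
  - exact: (deg_KX se xK yK).
  - by apply: deg_Kother => //; rewrite vX.
have nyx : y != x by rewrite eq_sym.
split.
- move=> R f _ cf.
  pose z : 'I_#|T| -> R := fun i => if enum_val i == x then (c%:R)%R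
    else if enum_val i == y then ((c + nY)%:R)%R else ((deg e (enum_val i))%:R)%R.
  have rk v i : (i == enum_rank v) = (enum_val i == v).
    by rewrite -{1}(enum_valK i) (inj_eq enum_rank_inj).
  have E1 : degvec R e = addunit z (nX%:R)%R (enum_rank x).
    apply: functional_extensionality => i; rewrite /degvec /addunit /z rk.
    case: eqP => [->|nx]; first by rewrite dx natrD.
    by case: eqP => [->|ny]; rewrite addr0 ?dy.
  have E2 : degvec R (Kop e K x y) = addunit z (nX%:R)%R (enum_rank y).
    apply: functional_extensionality => i; rewrite /degvec /addunit /z rk.
    case: eqP => [->|nx]; first by rewrite (negbTE nxy) dKx addr0.
    case: eqP => [->|ny]; first by rewrite dKy natrD.
    by rewrite addr0 doth //; apply/eqP.
  rewrite E1 E2; apply: cf.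
  - by move=> i; rewrite /z; case: ifP => _; [|case: ifP => _]; exact: ler0n.
  - by rewrite (inj_eq enum_rank_inj).
  - by rewrite /z !enum_rankK eqxx (negbTE nyx) eqxx ler_nat leq_addr.
  - exact: ler0n.
- move=> s _.
  have sp (F : T -> nat) : \sum_v F v = F x + (F y + \sum_(v | (v != x) && (v != y)) F v).
    rewrite (bigD1 x) //= (bigD1 y) //=; by congr (_ + (_ + _)).
  rewrite !sp [X in _ <= _ + (_ + X)](eq_bigr (fun v => deg e v ^ s)); last first.
    by move=> v /andP[vx vy]; rewrite doth.
  rewrite dx dy dKx dKy !addnA leq_add2r.
  have := pow_ineq c nY nX s; lia.
Qed.
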